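(* For every $T$, every sequence of outcomes $\mathbf x\in\{0,1\}^T$, every sequence of forecasts $\mathbf p\in[0,1]^T$, and every agent with a finite action set $\mathcal A$ and utility $u:\mathcal A\times\{0,1\}\to[-1,1]$, we have $\mathrm{AgentReg}_u(\mathbf p,\mathbf x)\le 4\,\mathrm{Cal}(\mathbf p,\mathbf x)$. In particular, if $\mathrm{Cal}(\mathbf p,\mathbf x)=o(T)$ then $\mathrm{AgentReg}_u(\mathbf p,\mathbf x)=o(T)$ for every such agent.
   Context: For $\mathbf x=(x_1,\dots,x_T)\in\{0,1\}^T$ and $\mathbf p=(p_1,\dots,p_T)\in[0,1]^T$, let $\beta=\frac1T\sum_t x_t$. For $p\in[0,1]$ let $n_p=|\{t:p_t=p\}|$ and $m_p=|\{t:p_t=p,\ x_t=1\}|$; the calibration error is $\mathrm{Cal}(\mathbf p,\mathbf x)=\sum_{p} |p\,n_p-m_p|$, the sum over the finitely many $p$ with $n_p>0$. An agent responds to forecast $p$ with an action $a(p)\in\arg\max_{a\in\mathcal A}\mathbb E_{x\sim\mathrm{Ber}(p)}[u(a,x)]$ (fixed tie-breaking), and $\mathrm{AgentReg}_u(\mathbf p,\mathbf x)=\sum_{t=1}^T u(a(\beta),x_t)-\sum_{t=1}^T u(a(p_t),x_t)$. *)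

(* Defs.v *)
From mathcomp Require Import all_boot all_order all_algebra.
Set Implicit Arguments. Unset Strict Implicit. Unset Printing Implicit Defensive.
Import Order.TTheory GRing.Theory Num.Theory.
Local Open Scope ring_scope.

Section Defs.
Variables (R : realFieldType) (T : nat).

(* beta = (1/T) sum_t x_t  (equals 0 when T = 0) *)
Definition avg_outcome (x : 'I_T -> bool) : R :=
  (\sum_(t < T) (x t)%:R) / T%:R.

Definition n_cnt (p : 'I_T -> R) (q : R) : R :=
  #|[set t : 'I_T | p t == q]|%:R.
Definition m_cnt (p : 'I_T -> R) (x : 'I_T -> bool) (q : R) : R :=
  #|[set t : 'I_T | (p t == q) && x t]|%:R.

Definition Cal (p : 'I_T -> R) (x : 'I_T -> bool) : R :=
  \sum_(q <- undup [seq p t | t <- enum 'I_T]) `| q * n_cnt p q - m_cnt p x q |.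

Definition exp_util (A : Type) (u : A -> bool -> R) (a : A) (q : R) : R :=
  (1 - q) * u a false + q * u a true.

Definition is_best_response (A : finType) (u : A -> bool -> R) (br : R -> A) :=
  forall q : R, 0 <= q <= 1 -> forall a : A, exp_util u a q <= exp_util u (br q) q.

Definition AgentReg (A : Type) (u : A -> bool -> R) (br : R -> A)
    (p : 'I_T -> R) (x : 'I_T -> bool) : R :=
  \sum_(t < T) u (br (avg_outcome x)) (x t) - \sum_(t < T) u (br (p t)) (x t).
End Defs.

(* Main.v *)
Require Import Defs.
From mathcomp Require Import all_boot all_order all_algebra.
From mathcomp Require Import ring lra.
Import Order.TTheory GRing.Theory Num.Theory.
Local Open Scope ring_scope.

Lemma sum_split_cnt (R : realFieldType) (T : nat) (x : 'I_T -> bool) (p : 'I_T -> R)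
  (q : R) (f : bool -> R) :
  \sum_(t < T | p t == q) f (x t) =
  n_cnt p q * f false + m_cnt p x q * (f true - f false).
Proof.
have -> : \sum_(t < T | p t == q) f (x t) =
   \sum_(t < T | p t == q) (f false + (x t)%:R * (f true - f false)).
  by apply: eq_bigr => t _; case: (x t) => /=; rewrite ?mul1r ?mul0r; ring.
rewrite big_split /= -mulr_suml sumr_const; congr (_ + _ * _).
  by rewrite mulr_natl; congr (_ *+ _); apply: eq_card => t; rewrite inE.
rewrite (bigID x) /= [X in _ + X]big1; last by move=> t /andP[_ /negbTE ->].
rewrite addr0 /m_cnt (eq_bigr (fun=> 1)); last by move=> t /andP[_ ->].
by rewrite sumr_const cardsE.
Qed.

Theorem theorem3p3 (R : realFieldType) (T : nat) (x : 'I_T -> bool) (p : 'I_T -> R)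
    (A : finType) (u : A -> bool -> R) (br : R -> A) :
  (forall t, 0 <= p t <= 1) ->
  (forall a b, -1 <= u a b <= 1) ->
  is_best_response u br ->
  AgentReg u br p x <= 4 * Cal p x.
Proof.
move=> hp hu hbr.
rewrite /AgentReg /Cal -sumrB mulr_sumr.
set a := br (avg_outcome _ _).
set s := undup [seq p t | t <- enum 'I_T].
have us : uniq s by exact: undup_uniq.
have ps : forall t, p t \in s.
  by move=> t; rewrite mem_undup; apply: map_f; rewrite mem_enum.
have -> : \sum_(t < T) (u a (x t) - u (br (p t)) (x t)) =
   \sum_(t < T) \sum_(q <- s) (if q == p t then u a (x t) - u (br (p t)) (x t) else 0).
  apply: eq_bigr => t _; rewrite -big_mkcond big_const_seq.
  have := count_uniq_mem (p t) us; rewrite ps => h; by rewrite h /= addr0.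
rewrite exchange_big /= big_seq [X in _ <= X]big_seq.
apply: ler_sum => q qs; rewrite -big_mkcond.
rewrite (eq_big (fun t => p t == q) (fun t => (fun b => u a b - u (br q) b) (x t))); last first.
- by move=> t /eqP ->.
- by move=> t; rewrite eq_sym.
change (\sum_(t < T | p t == q) (fun b => u a b - u (br q) b) (x t) <= 4 * `|q * n_cnt p q - m_cnt p x q|).
rewrite sum_split_cnt.
have q01 : 0 <= q <= 1.
  by move: qs; rewrite mem_undup => /mapP[t _ ->]; exact: hp.
have hb := hbr q q01 a; rewrite /exp_util in hb.
set n := n_cnt p q; set m := m_cnt p x q.
have n0 : 0 <= n by rewrite /n ler0n.
have key : n * ((1 - q) * u a false + q * u a true) <=
           n * ((1 - q) * u (br q) false + q * u (br q) true).
  by apply: ler_wpM2l.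
set D := (u a true - u (br q) true) - (u a false - u (br q) false).
have hD : `|D| <= 4.
  have := hu a true; have := hu a false; have := hu (br q) true; have := hu (br q) false.
  rewrite /D ler_norml => /andP[? ?] /andP[? ?] /andP[? ?] /andP[? ?].
  apply/andP; split; lra.
have e : n * (u a false - u (br q) false) + m * D
  = n * ((1 - q) * u a false + q * u a true) - n * ((1 - q) * u (br q) false + q * u (br q) true)
    + (m - q * n) * D by rewrite /D; ring.
rewrite e.
have h2 : (m - q * n) * D <= `|q * n - m| * 4.
  apply: le_trans (ler_norm _) _.
  by rewrite normrM distrC ler_wpM2l ?normr_ge0.
have h1 : n * ((1 - q) * u a false + q * u a true) - n * ((1 - q) * u (br q) false + q * u (br q) true) <= 0.
  by rewrite subr_le0.
apply: le_trans (lerD h1 h2) _.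
by rewrite add0r mulrC.
Qed.
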